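(* Let $\mathcal{T}$ be a simplicial tree, $G \leq \mathrm{Aut}(\mathcal{T})$, and let $g_1, g_2, g_3 \in G$ be supported in pairwise disjoint half-trees. Then for every $g \in G$, at least one of the following holds: (1) $[g_1^g, g_1] = 1$ or $[g_2^g, g_2] = 1$ or $[g_3^g, g_3] = 1$; (2) $[g_1^g, g_2] = [g_1^g, g_3] = [g_2^g, g_1] = [g_2^g, g_3] = [g_3^g, g_1] = [g_3^g, g_2] = 1$. In particular, for every $g \in G$ there exist $i, j \in \{1,2,3\}$ such that $[g_i^g, g_j] = 1$.
   Context: If $e$ is an edge of $\mathcal{T}$ and $v$ a vertex of $e$, the half-tree determined by $(e,v)$ is the subtree spanned by the vertices whose projection onto $e$ equals $v$. An element is supported in a half-tree $A$ if it fixes pointwise the complement of $A$. Notation: $h^g = g h g^{-1}$ and $[g,h] = g h g^{-1} h^{-1}$. *)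

(* Defs.v *)
From Stdlib Require Import List.
Import ListNotations.
Set Implicit Arguments.

Section Trees.
Variable V : Type.
Variable adj : V -> V -> Prop.

Fixpoint is_walk (l : list V) : Prop :=
  match l with
  | a :: ((b :: _) as t) => adj a b /\ is_walk t
  | _ => True
  end.

Fixpoint no_backtrack (l : list V) : Prop :=
  match l with
  | a :: ((b :: c :: _) as t) => a <> c /\ no_backtrack t
  | _ => True
  end.

Definition reduced_path (x y : V) (l : list V) : Prop :=
  hd_error l = Some x /\ last l x = y /\ is_walk l /\ no_backtrack l.

(* simplicial tree: simple graph in which any two vertices are joined by a
   unique reduced path (i.e. connected and without cycles) *)
Definition is_tree : Prop :=
  (forall x y, adj x y -> adj y x) /\ (forall x, ~ adj x x) /\
  (forall x y, exists! l, reduced_path x y l).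

(* half-tree determined by the edge e = {u,v} and its vertex v: vertices x
   whose projection onto e is v, i.e. the geodesic from x to u passes through v *)
Definition halftree (u v : V) (x : V) : Prop :=
  exists l, reduced_path x u l /\ In v l.

Record aut := Aut {
  fwd : V -> V;
  bwd : V -> V;
  fwd_bwd : forall x, fwd (bwd x) = x;
  bwd_fwd : forall x, bwd (fwd x) = x;
  fwd_adj : forall x y, adj x y <-> adj (fwd x) (fwd y)
}.

Lemma bwd_adj_aux (f : aut) x y : adj x y <-> adj (bwd f x) (bwd f y).
Proof. pose proof (fwd_adj f (bwd f x) (bwd f y)) as H. rewrite !fwd_bwd in H. tauto. Qed.

Definition aut_id : aut :=
  @Aut (fun x => x) (fun x => x) (fun _ => eq_refl) (fun _ => eq_refl)
       (fun _ _ => iff_refl _).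

Definition aut_mul (g h : aut) : aut.
Proof.
  refine (@Aut (fun x => fwd g (fwd h x)) (fun x => bwd h (bwd g x)) _ _ _).
  - intro x. rewrite fwd_bwd, fwd_bwd. reflexivity.
  - intro x. rewrite bwd_fwd, bwd_fwd. reflexivity.
  - intros x y. rewrite (fwd_adj h), (fwd_adj g). tauto.
Defined.

Definition aut_inv (g : aut) : aut :=
  @Aut (bwd g) (fwd g) (bwd_fwd g) (fwd_bwd g) (bwd_adj_aux g).

Definition aut_eq (g h : aut) : Prop := forall x, fwd g x = fwd h x.

Definition is_trivial (g : aut) : Prop := aut_eq g aut_id.

(* h^g = g h g^-1 *)
Definition conjg (g h : aut) : aut := aut_mul g (aut_mul h (aut_inv g)).

Definition commg (g h : aut) : aut :=
  aut_mul g (aut_mul h (aut_mul (aut_inv g) (aut_inv h))).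

Definition supported_in (g : aut) (A : V -> Prop) : Prop :=
  forall x, ~ A x -> fwd g x = x.

Definition is_subgroup (G : aut -> Prop) : Prop :=
  G aut_id /\ (forall g h, G g -> G h -> G (aut_mul g h)) /\
  (forall g, G g -> G (aut_inv g)).

Definition disjoint (A B : V -> Prop) : Prop := forall x, ~ (A x /\ B x).

End Trees.

(* Main.v *)
Require Import Defs.
From Stdlib Require Import List Classical.
Import ListNotations.
Set Implicit Arguments.

Lemma last_def (V : Type) (l : list V) d1 d2 : l <> [] -> last l d1 = last l d2.
Proof.
  induction l as [|a l IH]; intros H; [congruence|].
  destruct l as [|b l]; [reflexivity|]. simpl. apply IH. discriminate.
Qed.

Lemma nb_tail (V : Type) (a : V) l : no_backtrack (a :: l) -> no_backtrack l.
Proof. destruct l as [|b [|c l]]; simpl; tauto. Qed.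

Lemma rp_tail (V : Type) (adj : V -> V -> Prop) x y t l :
  reduced_path adj x t (x :: y :: l) -> reduced_path adj y t (y :: l) /\ adj x y.
Proof.
  intros [_ [Hl [Hw Hn]]]. destruct Hw as [Ha Hw].
  split; [|exact Ha]. split; [reflexivity|]. split.
  - rewrite <- Hl. transitivity (last (y :: l) x); [apply last_def; discriminate | reflexivity].
  - split; [exact Hw|]. eapply nb_tail; exact Hn.
Qed.

Lemma rp_uniq (V : Type) (adj : V -> V -> Prop) (Ht : is_tree adj) x y l1 l2 :
  reduced_path adj x y l1 -> reduced_path adj x y l2 -> l1 = l2.
Proof.
  intros H1 H2. destruct Ht as [_ [_ Hu]]. destruct (Hu x y) as [l0 [_ H0]].
  rewrite <- (H0 _ H1). apply H0; exact H2.
Qed.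

Lemma rp_ex (V : Type) (adj : V -> V -> Prop) (Ht : is_tree adj) x y :
  exists l, reduced_path adj x y l.
Proof. destruct Ht as [_ [_ Hu]]. destruct (Hu x y) as [l0 [H _]]. eauto. Qed.

Lemma rp_single (V : Type) (adj : V -> V -> Prop) a : reduced_path adj a a [a].
Proof. repeat split. Qed.

Lemma rp_pair (V : Type) (adj : V -> V -> Prop) a b : adj a b -> reduced_path adj a b [a; b].
Proof. intros H. repeat split; auto. Qed.

Lemma rp_hd (V : Type) (adj : V -> V -> Prop) x t l :
  reduced_path adj x t l -> exists r, l = x :: r.
Proof. intros [Hh _]. destruct l as [|a r]; simpl in Hh; [discriminate|].
  injection Hh as ->. eauto. Qed.

Lemma front (V : Type) (adj : V -> V -> Prop) (Ht : is_tree adj) a b t la lb :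
  adj a b -> reduced_path adj a t la -> reduced_path adj b t lb ->
  lb = b :: la \/ la = a :: lb.
Proof.
  intros Hab Ha Hb. pose proof Ht as [Hsym _].
  destruct (rp_hd Ha) as [r ->].
  destruct r as [|c r].
  - destruct Ha as [_ [Hl _]]. simpl in Hl. subst t.
    left. apply (rp_uniq Ht Hb). apply rp_pair. auto.
  - destruct (classic (c = b)) as [-> | Hcb].
    + right. f_equal. apply (rp_uniq Ht (proj1 (rp_tail Ha)) Hb).
    + left. apply (rp_uniq Ht Hb).
      destruct Ha as [_ [Hl [Hw Hn]]]. split; [reflexivity|]. split.
      * rewrite <- Hl. transitivity (last (c :: r) b); [reflexivity|].
        transitivity (last (c :: r) a); [apply last_def; discriminate | reflexivity].
      * split; [split; auto|]. split; auto.
Qed.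

Lemma ht_path (V : Type) (adj : V -> V -> Prop) (Ht : is_tree adj) u v x l :
  reduced_path adj x u l -> (halftree adj u v x <-> In v l).
Proof.
  intros Hr. split.
  - intros [l0 [Hr0 Hi]]. rewrite (rp_uniq Ht Hr Hr0). exact Hi.
  - intros Hi. exists l; auto.
Qed.

Lemma edge_inv (V : Type) (adj : V -> V -> Prop) (Ht : is_tree adj) u v a b :
  adj u v -> adj a b -> ~ (a = u /\ b = v) -> ~ (a = v /\ b = u) ->
  (halftree adj u v a <-> halftree adj u v b).
Proof.
  intros Huv Hab N1 N2. pose proof Ht as [Hsym _].
  destruct (rp_ex Ht a u) as [pa Ha]. destruct (rp_ex Ht b u) as [pb Hb].
  rewrite (ht_path Ht v Ha), (ht_path Ht v Hb).
  destruct (front Ht Hab Ha Hb) as [E|E].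
  - rewrite E. simpl. split; [tauto|]. intros [<- | H]; [|exact H].
    exfalso. rewrite E in Hb. pose proof (rp_uniq Ht Hb (@rp_pair _ _ _ _ (Hsym _ _ Huv))) as E2.
    injection E2 as E2. subst pa. destruct Ha as [Hh _]. simpl in Hh. injection Hh as ->. tauto.
  - rewrite E. simpl. split; [|tauto]. intros [<- | H]; [|exact H].
    exfalso. rewrite E in Ha. pose proof (rp_uniq Ht Ha (@rp_pair _ _ _ _ (Hsym _ _ Huv))) as E2.
    injection E2 as E2. subst pb. destruct Hb as [Hh _]. simpl in Hh. injection Hh as ->. tauto.
Qed.

Lemma K1 (V : Type) (adj : V -> V -> Prop) u v (P : V -> Prop) :
  (forall a b, adj a b -> halftree adj u v a -> halftree adj u v b -> (P a <-> P b)) ->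
  forall l x, reduced_path adj x u l -> In v l -> (P x <-> P v).
Proof.
  intros HP. induction l as [|c l IH]; intros x Hr Hi; [destruct Hi|].
  destruct (rp_hd Hr) as [r E]. injection E as E1 E2; subst c r.
  destruct Hi as [-> | Hi]; [tauto|].
  destruct l as [|y l]; [destruct Hi|].
  destruct (rp_tail Hr) as [Hr' Hxy].
  rewrite <- (IH y Hr' Hi). apply HP; auto.
  - exists (x :: y :: l). split; auto. right; auto.
  - exists (y :: l). auto.
Qed.

Lemma K2 (V : Type) (adj : V -> V -> Prop) (Ht : is_tree adj) u v (P : V -> Prop) :
  (forall a b, adj a b -> ~ halftree adj u v a -> ~ halftree adj u v b -> (P a <-> P b)) ->
  forall l x, reduced_path adj x u l -> ~ In v l -> (P x <-> P u).
Proof.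
  intros HP. induction l as [|c l IH]; intros x Hr Hi.
  - destruct (rp_hd Hr) as [r E]. discriminate.
  - destruct (rp_hd Hr) as [r E]. injection E as E1 E2; subst c r.
    destruct l as [|y l].
    + destruct Hr as [_ [Hl _]]. simpl in Hl. subst. tauto.
    + destruct (rp_tail Hr) as [Hr' Hxy].
      assert (Hi' : ~ In v (y :: l)) by (intro; apply Hi; right; auto).
      rewrite <- (IH y Hr' Hi'). apply HP; auto.
      * rewrite (ht_path Ht v Hr). exact Hi.
      * rewrite (ht_path Ht v Hr'). exact Hi'.
Qed.

Lemma four_point (V : Type) (adj : V -> V -> Prop) (Ht : is_tree adj) u v u' v' x y z w :
  adj u v -> adj u' v' ->
  halftree adj u v x -> halftree adj u' v' x ->
  halftree adj u' v' y -> ~ halftree adj u v y ->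
  halftree adj u v z -> ~ halftree adj u' v' z ->
  ~ halftree adj u v w -> ~ halftree adj u' v' w -> False.
Proof.
  intros Huv Hu'v' Sx S'x S'y Sy Sz S'z Sw S'w. pose proof Ht as [Hsym _].
  assert (Sv : halftree adj u v v) by (exists [v; u]; split; [apply rp_pair; auto | left; auto]).
  destruct (classic (u' = u /\ v' = v)) as [[-> ->] | N1]; [tauto|].
  destruct (classic (u' = v /\ v' = u)) as [[-> ->] | N2].
  - destruct (rp_ex Ht w u) as [l Hl].
    assert (Hni : ~ In v l) by (rewrite <- (ht_path Ht v Hl); exact Sw).
    assert (HP : forall a b, adj a b -> ~ halftree adj u v a -> ~ halftree adj u v b ->
         (halftree adj v u a <-> halftree adj v u b)).
    { intros a b Hab Na Nb. apply edge_inv; auto.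
      * intros [-> _]. contradiction.
      * intros [_ ->]. contradiction. }
    apply S'w. apply (proj2 (@K2 _ _ Ht _ _ _ HP l w Hl Hni)).
    exists [u; v]. split; [apply rp_pair; auto | left; auto].
  - assert (E : halftree adj u v u' <-> halftree adj u v v') by (apply edge_inv; auto).
    destruct (classic (halftree adj u v u')) as [Su' | Nu'].
    + assert (Su'' : halftree adj u v v') by tauto.
      assert (HP : forall a b, adj a b -> ~ halftree adj u v a -> ~ halftree adj u v b ->
         (halftree adj u' v' a <-> halftree adj u' v' b)).
      { intros a b Hab Na Nb. apply edge_inv; auto.
        - intros [-> _]; contradiction.
        - intros [-> _]; contradiction. }
      destruct (rp_ex Ht y u) as [ly Hly]. destruct (rp_ex Ht w u) as [lw Hlw].
      pose proof (@K2 _ _ Ht _ _ _ HP ly y Hly (fun H => Sy (proj2 (ht_path Ht v Hly) H))).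
      pose proof (@K2 _ _ Ht _ _ _ HP lw w Hlw (fun H => Sw (proj2 (ht_path Ht v Hlw) H))).
      tauto.
    + assert (Nv' : ~ halftree adj u v v') by tauto.
      assert (HP : forall a b, adj a b -> halftree adj u v a -> halftree adj u v b ->
         (halftree adj u' v' a <-> halftree adj u' v' b)).
      { intros a b Hab Na Nb. apply edge_inv; auto.
        - intros [-> _]; contradiction.
        - intros [-> _]; contradiction. }
      destruct (rp_ex Ht x u) as [lx Hlx]. destruct (rp_ex Ht z u) as [lz Hlz].
      pose proof (@K1 _ _ _ _ _ HP lx x Hlx (proj1 (ht_path Ht v Hlx) Sx)).
      pose proof (@K1 _ _ _ _ _ HP lz z Hlz (proj1 (ht_path Ht v Hlz) Sz)).
      tauto.
Qed.

Lemma walk_map (V : Type) (adj : V -> V -> Prop) (f : V -> V) :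
  (forall a b, adj a b -> adj (f a) (f b)) ->
  forall l, is_walk adj l -> is_walk adj (map f l).
Proof.
  intros Hf. induction l as [|a l IH]; [simpl; auto|].
  destruct l as [|b l]; [simpl; auto|].
  intros [H1 H2]. split; [auto|]. apply IH; exact H2.
Qed.

Lemma nb_map (V : Type) (f : V -> V) :
  (forall a b, f a = f b -> a = b) ->
  forall l, no_backtrack l -> no_backtrack (map f l).
Proof.
  intros Hf. induction l as [|a l IH]; [simpl; auto|].
  destruct l as [|b [|c l]]; [simpl; auto|simpl; auto|].
  intros [H1 H2]. split; [intro E; apply H1; auto|]. apply IH; exact H2.
Qed.

Lemma last_map' (V : Type) (f : V -> V) l d : last (map f l) (f d) = f (last l d).
Proof.
  induction l as [|a l IH]; [reflexivity|].
  destruct l as [|b l]; [reflexivity|]. exact IH.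
Qed.

Lemma rp_map (V : Type) (adj : V -> V -> Prop) (f : V -> V) :
  (forall a b, adj a b -> adj (f a) (f b)) -> (forall a b, f a = f b -> a = b) ->
  forall x y l, reduced_path adj x y l -> reduced_path adj (f x) (f y) (map f l).
Proof.
  intros Ha Hi x y l [Hh [Hl [Hw Hn]]]. split; [|split; [|split]].
  - destruct l; simpl in *; [discriminate|]. injection Hh as ->. reflexivity.
  - rewrite last_map'. congruence.
  - apply walk_map; auto.
  - apply nb_map; auto.
Qed.

Lemma ht_image (V : Type) (adj : V -> V -> Prop) (g : aut adj) u v y :
  halftree adj u v (bwd g y) <-> halftree adj (fwd g u) (fwd g v) y.
Proof.
  split.
  - intros [l [Hr Hi]]. exists (map (fwd g) l). split.
    + rewrite <- (fwd_bwd g y). apply rp_map; auto.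
      * intros a b H. exact (proj1 (fwd_adj g a b) H).
      * intros a b E. rewrite <- (bwd_fwd g a), <- (bwd_fwd g b). congruence.
    + apply in_map; auto.
  - intros [l [Hr Hi]]. exists (map (bwd g) l). split.
    + rewrite <- (bwd_fwd g u). apply rp_map; auto.
      * intros a b H. exact (proj1 (bwd_adj_aux g a b) H).
      * intros a b E. rewrite <- (fwd_bwd g a), <- (fwd_bwd g b). congruence.
    + rewrite <- (bwd_fwd g v). apply in_map; auto.
Qed.

Lemma supp_pres (V : Type) (adj : V -> V -> Prop) (f : aut adj) (A : V -> Prop) :
  supported_in f A -> forall x, A x -> A (fwd f x).
Proof.
  intros Hs x Ax. apply NNPP. intro N. pose proof (Hs _ N) as E.
  assert (fwd f x = x).
  { rewrite <- (bwd_fwd f (fwd f x)), E. apply bwd_fwd. }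
  congruence.
Qed.

Lemma supp_comm (V : Type) (adj : V -> V -> Prop) (f h : aut adj) (A B : V -> Prop) :
  supported_in f A -> supported_in h B -> disjoint A B -> is_trivial (commg f h).
Proof.
  intros Hf Hh D.
  assert (C : forall z, fwd f (fwd h z) = fwd h (fwd f z)).
  { intro z. destruct (classic (A z)) as [Az | Az].
    - assert (~ B z) by (intro; apply (D z); auto).
      assert (~ B (fwd f z)) by (intro; apply (D (fwd f z)); split; auto; apply (supp_pres Hf); auto).
      rewrite (Hh z), (Hh (fwd f z)); auto.
    - rewrite (Hf z Az). destruct (classic (B z)) as [Bz | Bz].
      + assert (~ A (fwd h z)) by (intro; apply (D (fwd h z)); split; auto; apply (supp_pres Hh); auto).
        apply Hf; auto.
      + rewrite (Hh z Bz). apply Hf; auto. }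
  intro x. simpl. rewrite C, fwd_bwd, fwd_bwd. reflexivity.
Qed.

Lemma conj_supp (V : Type) (adj : V -> V -> Prop) (g h : aut adj) (A : V -> Prop) :
  supported_in h A -> supported_in (conjg g h) (fun y => A (bwd g y)).
Proof. intros Hs y Ny. simpl. rewrite (Hs _ Ny). apply fwd_bwd. Qed.

Lemma key (V : Type) (adj : V -> V -> Prop) (Ht : is_tree adj) (g : aut adj)
  ui vi uj vj uk vk :
  adj ui vi -> adj uj vj ->
  disjoint (halftree adj ui vi) (halftree adj uj vj) ->
  disjoint (halftree adj ui vi) (halftree adj uk vk) ->
  disjoint (halftree adj uj vj) (halftree adj uk vk) ->
  (exists p, halftree adj ui vi p /\ halftree adj ui vi (bwd g p)) ->
  (exists p, halftree adj uj vj p /\ halftree adj uj vj (bwd g p)) ->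
  (exists p, halftree adj uk vk p /\ halftree adj uk vk (bwd g p)) ->
  disjoint (fun y => halftree adj ui vi (bwd g y)) (halftree adj uj vj).
Proof.
  intros Hei Hej Dij Dik Djk [y [Y1 Y2]] [z [Z1 Z2]] [w [W1 W2]] x [X1 X2].
  assert (Hgi : adj (fwd g ui) (fwd g vi)) by (exact (proj1 (fwd_adj g _ _) Hei)).
  apply (@four_point _ _ Ht uj vj (fwd g ui) (fwd g vi) x y z w Hej Hgi X2).
  - apply ht_image; auto.
  - apply ht_image; auto.
  - intro; apply (Dij y); auto.
  - exact Z1.
  - rewrite <- ht_image. intro; apply (Dij (bwd g z)); auto.
  - intro; apply (Djk w); auto.
  - rewrite <- ht_image. intro; apply (Dik (bwd g w)); auto.
Qed.

Lemma dsym (V : Type) (A B : V -> Prop) : disjoint A B -> disjoint B A.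
Proof. intros D x [H1 H2]. apply (D x); auto. Qed.

Theorem lemma3p6 (V : Type) (adj : V -> V -> Prop) (Htree : is_tree adj)
  (G : aut adj -> Prop) (HG : is_subgroup G)
  (g1 g2 g3 : aut adj) (H1 : G g1) (H2 : G g2) (H3 : G g3)
  (u1 v1 u2 v2 u3 v3 : V)
  (He1 : adj u1 v1) (He2 : adj u2 v2) (He3 : adj u3 v3)
  (Hd12 : disjoint (halftree adj u1 v1) (halftree adj u2 v2))
  (Hd13 : disjoint (halftree adj u1 v1) (halftree adj u3 v3))
  (Hd23 : disjoint (halftree adj u2 v2) (halftree adj u3 v3))
  (Hs1 : supported_in g1 (halftree adj u1 v1))
  (Hs2 : supported_in g2 (halftree adj u2 v2))
  (Hs3 : supported_in g3 (halftree adj u3 v3)) :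
  forall g : aut adj, G g ->
    ((is_trivial (commg (conjg g g1) g1) \/
      is_trivial (commg (conjg g g2) g2) \/
      is_trivial (commg (conjg g g3) g3)) \/
     (is_trivial (commg (conjg g g1) g2) /\ is_trivial (commg (conjg g g1) g3) /\
      is_trivial (commg (conjg g g2) g1) /\ is_trivial (commg (conjg g g2) g3) /\
      is_trivial (commg (conjg g g3) g1) /\ is_trivial (commg (conjg g g3) g2)))
    /\
    (exists a b : aut adj,
      (a = g1 \/ a = g2 \/ a = g3) /\ (b = g1 \/ b = g2 \/ b = g3) /\
      is_trivial (commg (conjg g a) b)).
Proof.
  intros g _.
  assert (M : (is_trivial (commg (conjg g g1) g1) \/
      is_trivial (commg (conjg g g2) g2) \/
      is_trivial (commg (conjg g g3) g3)) \/
     (is_trivial (commg (conjg g g1) g2) /\ is_trivial (commg (conjg g g1) g3) /\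
      is_trivial (commg (conjg g g2) g1) /\ is_trivial (commg (conjg g g2) g3) /\
      is_trivial (commg (conjg g g3) g1) /\ is_trivial (commg (conjg g g3) g2))).
  { assert (Cs : forall (a b : aut adj) (A B : V -> Prop), supported_in a A -> supported_in b B ->
        disjoint (fun y => A (bwd g y)) B -> is_trivial (commg (conjg g a) b)).
    { intros a b A B Ha Hb D. eapply supp_comm; [apply conj_supp; exact Ha | exact Hb | exact D]. }
    destruct (classic (exists p, halftree adj u1 v1 p /\ halftree adj u1 v1 (bwd g p))) as [E1|E1];
    [|left; left; apply (Cs _ _ _ _ Hs1 Hs1); intros x [A B]; apply E1; eauto].
    destruct (classic (exists p, halftree adj u2 v2 p /\ halftree adj u2 v2 (bwd g p))) as [E2|E2];
    [|left; right; left; apply (Cs _ _ _ _ Hs2 Hs2); intros x [A B]; apply E2; eauto].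
    destruct (classic (exists p, halftree adj u3 v3 p /\ halftree adj u3 v3 (bwd g p))) as [E3|E3];
    [|left; right; right; apply (Cs _ _ _ _ Hs3 Hs3); intros x [A B]; apply E3; eauto].
    right. split; [|split; [|split; [|split; [|split]]]].
    - apply (Cs _ _ _ _ Hs1 Hs2). exact (@key _ _ Htree g _ _ _ _ _ _ He1 He2 Hd12 Hd13 Hd23 E1 E2 E3).
    - apply (Cs _ _ _ _ Hs1 Hs3). exact (@key _ _ Htree g _ _ _ _ _ _ He1 He3 Hd13 Hd12 (dsym Hd23) E1 E3 E2).
    - apply (Cs _ _ _ _ Hs2 Hs1). exact (@key _ _ Htree g _ _ _ _ _ _ He2 He1 (dsym Hd12) Hd23 Hd13 E2 E1 E3).
    - apply (Cs _ _ _ _ Hs2 Hs3). exact (@key _ _ Htree g _ _ _ _ _ _ He2 He3 Hd23 (dsym Hd12) (dsym Hd13) E2 E3 E1).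
    - apply (Cs _ _ _ _ Hs3 Hs1). exact (@key _ _ Htree g _ _ _ _ _ _ He3 He1 (dsym Hd13) (dsym Hd23) Hd12 E3 E1 E2).
    - apply (Cs _ _ _ _ Hs3 Hs2). exact (@key _ _ Htree g _ _ _ _ _ _ He3 He2 (dsym Hd23) (dsym Hd13) (dsym Hd12) E3 E2 E1). }
  split; [exact M|].
  destruct M as [[M|[M|M]]|[M _]].
  - exists g1, g1. auto.
  - exists g2, g2. auto.
  - exists g3, g3. auto.
  - exists g1, g2. auto.
Qed.
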